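(* Let $X$ be a topological quandle. (1) If $X$ has the discrete topology, then $H_n(X)=C_n(X)$ for all $n$ (i.e. all boundary maps vanish, so $H_n(X)\cong C_n(X)$). (2) If the quandle structure of $X$ is trivial (i.e. $x\triangleright y=x$ for all $x,y$), then $H_n(X)=C_n(X)$ for all $n$.
   Context: A quandle is a set with a binary operation $\triangleright$ such that $x\triangleright x=x$, each $\beta_y(x)=x\triangleright y$ is bijective, and $(x\triangleright y)\triangleright z=(x\triangleright z)\triangleright(y\triangleright z)$. A topological quandle is a topological space with a continuous quandle operation such that every $\beta_y$ is a homeomorphism. Let $\Delta^n$ have vertices $e_0,\dots,e_n$ ($\Delta^{n-1}$ has vertices $\bar e_0,\dots,\bar e_{n-1}$). For a singular $n$-simplex $\sigma:\Delta^n\to X$ write $\sigma=\sigma_{[x_1,\dots,x_{n+1}]}$ with $x_i=\sigma(e_{i-1})$; singular simplices are combined pointwise by $(\sigma\triangleright\tau)(t)=\sigma(t)\triangleright\tau(t)$. $C_n(X)$ is the free abelian group on singular $n$-simplices. For $2\le i\le n+1$, $d_i\sigma$ is $\sigma$ restricted to the face omitting $e_{i-1}$ (via $\bar e_j\mapsto e_j$ for $j\le i-2$, $\bar e_j\mapsto e_{j+1}$ for $j\ge i-1$), and $s_i\sigma=\sigma\circ\iota_i$ with $\iota_i(\sum t_j\bar e_j)=(\sum_{k=0}^{i-2}t_k)e_{i-1}+\sum_{j=i-1}^{n-1}t_je_{j+1}$. The boundary is $\partial_n\sigma=\sum_{i=2}^{n+1}(-1)^i(d_i\sigma-d_i\sigma\triangleright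 s_i\sigma)$, extended linearly ($\partial_0=0$); $H_n(X)$ is the $n$-th homology of $(C_*(X),\partial)$. *)

(* Defs.v *)
From mathcomp Require Import all_boot all_order all_algebra.
From mathcomp Require Import all_classical all_reals all_analysis.
From mathcomp Require Import Rstruct Rstruct_topology.

Set Implicit Arguments.
Unset Strict Implicit.
Unset Printing Implicit Defensive.

Import Order.TTheory GRing.Theory Num.Theory.
Local Open Scope classical_set_scope.
Local Open Scope ring_scope.

Notation RR := Rdefinitions.R.

Definition qbeta (X : Type) (op : X -> X -> X) (y : X) : X -> X :=
  fun x => op x y.

Definition is_quandle (X : Type) (op : X -> X -> X) : Prop :=
  [/\ (forall x, op x x = x),
      (forall y, bijective (qbeta op y)) &
      (forall x y z, op (op x y) z = op (op x z) (op y z))].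

Definition is_topological_quandle (X : topologicalType) (op : X -> X -> X)
  : Prop :=
  [/\ is_quandle op,
      continuous (fun p : X * X => op p.1 p.2) &
      (forall y, exists g : X -> X,
          [/\ cancel (qbeta op y) g, cancel g (qbeta op y),
              continuous (qbeta op y) & continuous g])].

Definition discrete_topology_on (X : topologicalType) : Prop :=
  forall A : set X, open A.

Definition trivial_quandle (X : Type) (op : X -> X -> X) : Prop :=
  forall x y, op x y = x.

(* Delta^n as a subset of R^(n+1) (row vectors); vertex e_j is the j-th
   standard basis vector, coordinates are barycentric. *)
Definition Delta (n : nat) : set 'rV[RR]_(n.+1) :=
  [set t | (forall j, 0 <= t ord0 j) /\ \sum_(j < n.+1) t ord0 j = 1].
Arguments Delta n : clear implicits.

(* A singular n-simplex is a map sigma : Delta^n -> X, continuous for the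
   subspace topology; we represent it by a function on R^(n+1) of which only
   the restriction to Delta^n matters. *)
Definition sing_fun (X : Type) (n : nat) := 'rV[RR]_(n.+1) -> X.

Definition is_singular (X : topologicalType) (n : nat) (s : sing_fun X n)
  : Prop := {within Delta n, continuous s}.

Definition same_simplex (X : Type) (n : nat) (s t : sing_fun X n) : Prop :=
  forall x, Delta n x -> s x = t x.

Definition sop (X : Type) (op : X -> X -> X) (n : nat)
  (s t : sing_fun X n) : sing_fun X n := fun x => op (s x) (t x).

(* For k = i-1 with 1 <= k <= n (here n = m.+1, so Delta^n has m+2 vertices):
   face_map k : Delta^m -> Delta^(m+1),  ebar_j |-> e_j (j < k),
                                          ebar_j |-> e_(j+1) (j >= k),
   i.e. the affine map omitting vertex e_k. *)
Definition face_map (m : nat) (k : nat) (t : 'rV[RR]_(m.+1)) : 'rV[RR]_(m.+2) :=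
  \row_(j < m.+2)
     (if (j < k)%N then t ord0 (inord j)
      else if j == k :> nat then 0 else t ord0 (inord j.-1)).

(* iota_i with k = i-1:
   iota(sum t_j ebar_j) = (sum_(l < k) t_l) e_k + sum_(j >= k) t_j e_(j+1). *)
Definition degen_map (m : nat) (k : nat) (t : 'rV[RR]_(m.+1)) : 'rV[RR]_(m.+2) :=
  \row_(j < m.+2)
     (if (j < k)%N then 0
      else if j == k :> nat then \sum_(l < m.+1 | (l < k)%N) t ord0 l
      else t ord0 (inord j.-1)).

(* d_i sigma and s_i sigma, with k = i-1 *)
Definition dface (X : Type) (m k : nat) (s : sing_fun X m.+1) : sing_fun X m :=
  fun t => s (face_map k t).
Definition sdegen (X : Type) (m k : nat) (s : sing_fun X m.+1) : sing_fun X m :=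
  fun t => s (degen_map k t).

(* A chain is a formal finite Z-linear combination of singular n-simplices,
   given as a list of (coefficient, simplex) pairs. *)
Definition chain (X : Type) (n : nat) := seq (int * sing_fun X n).

Definition valid_chain (X : topologicalType) (n : nat) (c : chain X n) : Prop :=
  forall p, List.In p c -> is_singular p.2.

Definition coeff (X : Type) (n : nat) (c : chain X n) (tau : sing_fun X n)
  : int :=
  \sum_(p <- c) (if `[< same_simplex p.2 tau >] then p.1 else 0).

(* equality in the free abelian group *)
Definition chain_eq (X : Type) (n : nat) (c d : chain X n) : Prop :=
  forall tau, coeff c tau = coeff d tau.

Definition chain_zero (X : Type) (n : nat) (c : chain X n) : Prop :=
  chain_eq c [::].

(* boundary of a singular (m+1)-simplex:
   sum_(i=2)^(m+2) (-1)^i (d_i sigma - d_i sigma |> s_i sigma), k = i-1 *)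
Definition bd_simplex (X : Type) (op : X -> X -> X) (m : nat)
  (s : sing_fun X m.+1) : chain X m :=
  flatten [seq [:: ((-1) ^+ k.+1, dface k s);
                   (- (-1) ^+ k.+1, sop op (dface k s) (sdegen k s))]
          | k <- iota 1 m.+1].

Definition bd (X : Type) (op : X -> X -> X) (m : nat) (c : chain X m.+1)
  : chain X m :=
  flatten [seq [seq (p.1 * q.1, q.2) | q <- bd_simplex op p.2] | p <- c].

(* cycles Z_n (partial_0 = 0) and boundaries B_n *)
Definition is_cycle (X : Type) (op : X -> X -> X) (n : nat) : chain X n -> Prop :=
  match n with
  | 0 => fun _ => True
  | m.+1 => fun c => chain_zero (bd op c)
  end.

Definition is_boundary (X : topologicalType) (op : X -> X -> X) (n : nat)
  (c : chain X n) : Prop :=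
  exists d : chain X n.+1, valid_chain d /\ chain_eq (bd op d) c.

(* H_n(X) = C_n(X): every n-chain is a cycle and the only boundary is 0,
   i.e. Z_n = C_n and B_n = 0. *)
Definition homology_equals_chains (X : topologicalType) (op : X -> X -> X)
  (n : nat) : Prop :=
  forall c : chain X n, valid_chain c ->
    is_cycle op c /\ (is_boundary op c -> chain_zero c).

(* Main.v *)
Require Import Defs.
From mathcomp Require Import all_boot all_order all_algebra.
From mathcomp Require Import all_classical all_reals all_analysis.
From mathcomp Require Import Rstruct Rstruct_topology.
From mathcomp Require Import ring.
Set Implicit Arguments. Unset Strict Implicit. Unset Printing Implicit Defensive.
Import Order.TTheory GRing.Theory Num.Theory.
Local Open Scope classical_set_scope.
Local Open Scope ring_scope.
From mathcomp Require Import zify.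

Lemma lift_face m k (i : 'I_m.+1) (t : 'rV[RR]_m.+1) : (k <= m.+1)%N ->
  face_map k t ord0 (lift (inord k) i) = t ord0 i.
Proof.
move=> hk; rewrite mxE /= /bump inordK ?ltnS //.
case: (leqP k i) => hi /=.
  have h1 : (i.+1 < k)%N = false by apply/negbTE; rewrite -leqNgt ltnW.
  have h2 : (i.+1 == k) = false by apply/negbTE; rewrite neq_ltn ltnS hi orbT.
  by rewrite add1n add0n h1 h2 inord_val.
by rewrite add0n hi inord_val.
Qed.

Lemma lift_degen m k (i : 'I_m.+1) (t : 'rV[RR]_m.+1) : (k <= m.+1)%N ->
  degen_map k t ord0 (lift (inord k) i) = if (i < k)%N then 0 else t ord0 i.
Proof.
move=> hk; rewrite mxE /= /bump inordK ?ltnS //.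
case: (leqP k i) => hi /=.
  have h1 : (i.+1 < k)%N = false by apply/negbTE; rewrite -leqNgt ltnW.
  have h2 : (i.+1 == k) = false by apply/negbTE; rewrite neq_ltn ltnS hi orbT.
  have h3 : (i < k)%N = false by apply/negbTE; rewrite -leqNgt.
  by rewrite add1n add0n h1 h2 inord_val.
by rewrite add0n hi.
Qed.

Lemma face_Delta m k t : (k <= m.+1)%N -> Delta m t -> Delta m.+1 (face_map k t).
Proof.
move=> hk [t0 t1]; split.
  move=> j; rewrite mxE; case: ifP => _ //; case: ifP => _ //.
rewrite (bigD1_ord (inord k)) //= mxE inordK ?ltnS // ltnn eqxx add0r.
by rewrite -t1; apply: eq_bigr => i _; rewrite lift_face.
Qed.

Lemma degen_Delta m k t : (k <= m.+1)%N -> Delta m t -> Delta m.+1 (degen_map k t).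
Proof.
move=> hk [t0 t1]; split.
  move=> j; rewrite mxE; case: ifP => _ //; case: ifP => _ //.
  by apply: sumr_ge0.
rewrite (bigD1_ord (inord k)) //= mxE inordK ?ltnS // ltnn eqxx.
rewrite -t1 [RHS](bigID (fun l : 'I_m.+1 => (l < k)%N)) /=; congr (_ + _).
rewrite [RHS]big_mkcond /=; apply: eq_bigr => i _; rewrite lift_degen //.
by case: ifP.
Qed.
Lemma disc_const (X : topologicalType) n (s : sing_fun X n) :
  discrete_topology_on X -> is_singular s ->
  forall x y, Delta n x -> Delta n y -> s x = s y.
Proof.
move=> hd hs x y [x0 x1] [y0 y1].
pose g := fun l : RR => x + l *: (y - x).
have gc : continuous g.
  move=> l; apply: cvgD; first exact: cvg_cst.
  by apply: cvgZl; exact: cvg_id.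
have gD : g @` `[0%R, 1%R] `<=` Delta n.
  move=> _ [l /= hl <-]; rewrite in_itv /= in hl; case/andP: hl => l0 l1; split.
    move=> j; rewrite /g !mxE.
    have -> : x ord0 j + l * (y ord0 j - x ord0 j) = (1 - l) * x ord0 j + l * y ord0 j by ring.
    by apply: addr_ge0; apply: mulr_ge0; rewrite ?subr_ge0.
  rewrite /g.
  under eq_bigr do rewrite !mxE.
  by rewrite big_split /= -mulr_sumr sumrB x1 y1 subrr mulr0 addr0.
have cA : connected (g @` `[0%R, 1%R]).
  apply: connected_continuous_connected; first exact: segment_connected.
  exact: continuous_subspaceT.
have cB := connected_continuous_connected cA (continuous_subspaceW gD hs).
set B := s @` _ in cB.
have Bx : B (s x).
  exists x => //; exists 0; last by rewrite /g scale0r addr0.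
  by rewrite set_itvcc /= lexx ler01.
have By : B (s y).
  exists y => //; exists 1; first by rewrite set_itvcc /= lexx ler01.
  by rewrite /g scale1r addrC subrK.
have := cB (B `&` [set s x]).
have E : B `&` [set s x] = B.
  apply: cB.
  - by exists (s x).
  - by exists [set s x].
  - exists [set s x] => //.
    rewrite -(setCK [set s x]); apply: open_closedC; exact: hd.
by move: By; rewrite -E => -[_ ->].
Qed.

Lemma sum_In0 (T : Type) (s : seq T) (F : T -> int) :
  (forall p, List.In p s -> F p = 0) -> \sum_(p <- s) F p = 0.
Proof.
elim: s => [|a s IH] H; first by rewrite big_nil.
rewrite big_cons H /=; last by left.
by rewrite add0r IH // => p hp; apply: H; right.
Qed.

Lemma bd_zero (X : topologicalType) (op : X -> X -> X) m (c : chain X m.+1) :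
  (forall p, List.In p c -> forall k, (1 <= k <= m.+1)%N ->
     same_simplex (sop op (dface k p.2) (sdegen k p.2)) (dface k p.2)) ->
  chain_zero (bd op c).
Proof.
move=> H tau; rewrite /coeff big_nil /bd big_flatten big_map.
apply: sum_In0 => p Hp.
rewrite big_map /bd_simplex big_flatten big_map.
apply: big1_seq => k /andP [_]; rewrite mem_iota => hk.
have hk' : (1 <= k <= m.+1)%N by move: hk; rewrite add1n ltnS.
have hs := H p Hp k hk'.
rewrite !big_cons big_nil /=.
case: asboolP => h1; case: asboolP => h2.
- by rewrite mulrN addr0 addrN.
- by exfalso; apply: h2 => x Dx; rewrite hs // h1.
- by exfalso; apply: h1 => x Dx; rewrite -hs // h2.
- by rewrite !addr0.
Qed.

Lemma homol_of (X : topologicalType) (op : X -> X -> X) :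
  (forall m (s : sing_fun X m.+1), is_singular s -> forall k, (1 <= k <= m.+1)%N ->
     same_simplex (sop op (dface k s) (sdegen k s)) (dface k s)) ->
  forall n, homology_equals_chains op n.
Proof.
move=> H n c hc; split.
  case: n c hc => [//|m] c hc /=; apply: bd_zero => p Hp k hk.
  exact: H (hc p Hp) k hk.
move=> [d [hd he]] tau; rewrite -he; apply: bd_zero => p Hp k hk.
exact: H (hd p Hp) k hk.
Qed.

Theorem mainTheorem4 (X : topologicalType) (op : X -> X -> X) :
  is_topological_quandle op ->
  (discrete_topology_on X -> forall n : nat, homology_equals_chains op n) /\
  (trivial_quandle op -> forall n : nat, homology_equals_chains op n).
Proof.
move=> [[idem _ _] _ _]; split => [hd|htriv]; apply: homol_of.
  move=> m s hs k /andP [_ hk] x Dx; rewrite /sop /dface /sdegen.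
  rewrite (@disc_const X m.+1 s hd hs (degen_map k x) (face_map k x)) ?idem //.
    exact: degen_Delta.
  exact: face_Delta.
by move=> m s hs k hk x Dx; rewrite /sop htriv.
Qed.
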